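(* Let $e_1,e_2$ be a basis of $\mathbb{Z}^2$. Up to isomorphism, the smooth toric varieties admitting a proper birational toric morphism to $\mathbb{A}^2$ and having nef anticanonical divisor are $\mathbb{A}^2$ and the varieties $Z_m$ ($m\ge1$), where $Z_m$ is the toric variety whose fan has maximal cones $\mathrm{cone}(e_1,e_1+e_2)$, $\mathrm{cone}(e_1+e_2,e_1+2e_2)$, $\dots$, $\mathrm{cone}(e_1+(m-1)e_2,e_1+me_2)$, $\mathrm{cone}(e_1+me_2,e_2)$.
   Context: $\mathbb{A}^2$ is the toric variety with fan $\mathrm{cone}(e_1,e_2)$ and its faces; toric varieties birationally proper over $\mathbb{A}^2$ correspond to fans subdividing $\mathrm{cone}(e_1,e_2)$. *)

(* Defs.v *)
(* Combinatorial (toric-dictionary) encoding of smooth toric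
   surfaces that are proper and birational over A^2 = X(cone(e1,e2)). *)
From mathcomp Require Import all_boot all_order all_algebra.
Set Implicit Arguments. Unset Strict Implicit. Unset Printing Implicit Defensive.
Import Order.TTheory GRing.Theory Num.Theory.
Local Open Scope ring_scope.

Definition vec := (int * int)%type.
Definition e1 : vec := (1, 0).
Definition e2 : vec := (0, 1).
Definition det2 (u v : vec) : int := u.1 * v.2 - u.2 * v.1.

(* A fan subdividing cone(e1,e2) (i.e. a toric variety with a proper birational
   toric morphism to A^2) is given by its rays listed counterclockwise
   s = [v_0 = e1; v_1; ...; v_n = e2], all in the quadrant, with maximal cones
   cone(v_i, v_{i+1}).  Smoothness: each (v_i, v_{i+1}) is a Z-basis
   (positively oriented: det = 1). *)
Definition ray (s : seq vec) (i : nat) : vec := nth (0, 0) s i.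

Definition smooth_quadrant_fan (s : seq vec) : Prop :=
  [/\ (1 < size s)%N,
      ray s 0 = e1,
      ray s (size s).-1 = e2,
      (forall i, (i < size s)%N -> 0 <= (ray s i).1 /\ 0 <= (ray s i).2) &
      (forall i, (i.+1 < size s)%N -> det2 (ray s i) (ray s i.+1) = 1)].

Definition maxcone (s : seq vec) (u v : vec) : Prop :=
  exists i, (i.+1 < size s)%N /\
    ((u = ray s i /\ v = ray s i.+1) \/ (u = ray s i.+1 /\ v = ray s i)).

(* isomorphism of toric varieties = lattice automorphism carrying the fan
   onto the other fan (for 2-dim fans determined by the maximal cones) *)
Definition lin (a b c d : int) (v : vec) : vec :=
  (a * v.1 + b * v.2, c * v.1 + d * v.2).

Definition toric_iso (s t : seq vec) : Prop :=
  exists a b c d : int,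
    (a * d - b * c = 1 \/ a * d - b * c = -1) /\
    forall u v, maxcone s u v <-> maxcone t (lin a b c d u) (lin a b c d v).

(* For an interior ray v_i
   (0 < i < n) the divisor D_i is a complete curve; v_{i-1} + v_{i+1} = a_i v_i
   with a_i = det2 v_{i-1} v_{i+1} (as det2 v_{i-1} v_i = 1), and D_i^2 = -a_i,
   D_i.D_j = 1 if |i-j| = 1, and 0 otherwise. *)
Definition selfint_coeff (s : seq vec) (i : nat) : int :=
  det2 (ray s i.-1) (ray s i.+1).

Definition inter (s : seq vec) (j i : nat) : int :=
  if j == i then - selfint_coeff s i
  else if (j == i.+1) || (i == j.+1) then 1 else 0.

(* (-K_X) . D_i  with  -K_X = sum of all torus-invariant prime divisors *)
Definition anticanonical_dot (s : seq vec) (i : nat) : int :=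
  \sum_(j < size s) inter s j i.

(* -K_X nef: nonnegative on every complete torus-invariant curve, i.e. on the
   D_i for interior rays (D_0, D_n are affine lines, not complete). *)
Definition nef_anticanonical (s : seq vec) : Prop :=
  forall i, (0 < i)%N -> (i.+1 < size s)%N -> 0 <= anticanonical_dot s i.

Definition fanA2 : seq vec := [:: e1; e2].
Definition fanZ (m : nat) : seq vec :=
  e1 :: [seq ((1 : int), (k%:Z : int)) | k <- iota 1 m] ++ [:: e2].

(* Main.v *)
Require Import Defs.
From mathcomp Require Import all_boot all_order all_algebra.
From mathcomp Require Import zify ring lra.
From Stdlib Require Import Classical.
Import Order.TTheory GRing.Theory Num.Theory.
Local Open Scope ring_scope.
Lemma pos_sum (u1 u2 v1 v2 : int) : 0 <= u1 -> 0 <= u2 -> 0 < u1 * v2 - u2 * v1 -> 0 < u1 + u2.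
Proof.
move=> h1 h2 h; rewrite lt_def; apply/andP; split; last lra.
apply/negP=> /eqP e. have e1 : u1 = 0 by lra. have e2 : u2 = 0 by lra.
by move: h; rewrite e1 e2 !mul0r subrr ltxx.
Qed.
Lemma trans_det (u v w : vec) :
  0 <= u.1 -> 0 <= u.2 -> 0 <= v.1 -> 0 <= v.2 -> 0 <= w.1 -> 0 <= w.2 ->
  0 < det2 u v -> 0 < det2 v w -> 0 < det2 u w.
Proof.
case: u => u1 u2; case: v => v1 v2; case: w => w1 w2; rewrite /det2 /= => a1 a2 b1 b2 c1 c2 d1 d2.
have pu := pos_sum _ _ _ _ a1 a2 d1.
have pw : 0 < w1 + w2.
  rewrite addrC; apply: (pos_sum _ _ v2 v1 c2 c1); lra.
have id : (u1 * w2 - u2 * w1) * (v1 + v2) = (v1 * w2 - v2 * w1) * (u1 + u2) + (u1 * v2 - u2 * v1) * (w1 + w2) by ring.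
have hp : 0 < (u1 * w2 - u2 * w1) * (v1 + v2).
  rewrite id; apply: ltr_wpDl; [by rewrite mulr_ge0 // ltW | by rewrite mulr_gt0].
rewrite ltNge; apply/negP=> hn.
move: hp; rewrite ltNge => /negP; apply.
by apply: mulr_le0_ge0 => //; lra.
Qed.

Section Fan.
Variable s : seq vec.
Hypothesis hs : smooth_quadrant_fan s.

Lemma sq_quad i : (i < size s)%N -> 0 <= (ray s i).1 /\ 0 <= (ray s i).2.
Proof. by case: hs => _ _ _ h _; apply: h. Qed.
Lemma sq_d1 i : (i.+1 < size s)%N -> det2 (ray s i) (ray s i.+1) = 1.
Proof. by case: hs => _ _ _ _ h; apply: h. Qed.

Lemma sq_det i j : (i < j)%N -> (j < size s)%N -> 0 < det2 (ray s i) (ray s j).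
Proof.
elim: j => // j IH hij hj.
have [->|hne] := eqVneq i j; first by rewrite sq_d1.
have hij' : (i < j)%N by lia.
have [q1 q2] := sq_quad i ltac:(lia).
have [r1 r2] := sq_quad j ltac:(lia).
have [t1 t2] := sq_quad j.+1 hj.
apply: (trans_det _ (ray s j)) => //; first by apply: IH => //; lia.
by rewrite sq_d1.
Qed.

Lemma det_self (u : vec) : det2 u u = 0.
Proof. by rewrite /det2 mulrC subrr. Qed.

Lemma sq_neq i j : (i < j)%N -> (j < size s)%N -> ray s i <> ray s j.
Proof. move=> h1 h2 e; have := sq_det i j h1 h2; by rewrite e det_self ltxx. Qed.

Lemma sq_rec i : (0 < i)%N -> (i.+1 < size s)%N ->
  (ray s i.+1).1 = selfint_coeff s i * (ray s i).1 - (ray s i.-1).1 /\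
  (ray s i.+1).2 = selfint_coeff s i * (ray s i).2 - (ray s i.-1).2.
Proof.
move=> h1 h2.
have d1 := sq_d1 i.-1 ltac:(lia). rewrite prednK // in d1.
have d2 := sq_d1 i ltac:(lia).
rewrite /selfint_coeff.
move: d1 d2; rewrite /det2.
case: (ray s i.-1) => p1 p2; case: (ray s i) => q1 q2; case: (ray s i.+1) => r1 r2 /= d1 d2.
split.
  have e : r1 = (p1*q2-p2*q1)*r1 by rewrite d1 mul1r.
  rewrite {1}e; have -> : (p1*q2 - p2*q1)*r1 = (p1*r2-p2*r1)*q1 - (q1*r2 - q2*r1) * p1 by ring.
  rewrite d2; ring.
have e : r2 = (p1*q2-p2*q1)*r2 by rewrite d1 mul1r.
rewrite {1}e; have -> : (p1*q2 - p2*q1)*r2 = (p1*r2-p2*r1)*q2 - (q1*r2 - q2*r1) * p2 by ring.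
rewrite d2; ring.
Qed.

Lemma sq_a_pos i : (0 < i)%N -> (i.+1 < size s)%N -> 0 < selfint_coeff s i.
Proof. move=> h1 h2; rewrite /selfint_coeff; apply: sq_det => //; lia. Qed.
End Fan.

Lemma sum_inter s i N : (0 < i)%N ->
  \sum_(j < N) inter s j i =
  (if (i < N)%N then - selfint_coeff s i else 0) + (if (i.+1 < N)%N then 1 else 0)
  + (if (i.-1 < N)%N then 1 else 0).
Proof.
move=> hi; elim: N => [|N IH]; first by rewrite big_ord0.
rewrite big_ord_recr /= IH /inter.
set c := selfint_coeff s i.
by repeat case: ifP; move=> *; lia.
Qed.
Lemma acd s i : (0 < i)%N -> (i.+1 < size s)%N ->
  anticanonical_dot s i = 2 - selfint_coeff s i.
Proof.
move=> h1 h2; rewrite /anticanonical_dot sum_inter // !ifT //; try lia.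
Qed.

Lemma lin_zero (a b c d u1 u2 : int) : (a * d - b * c = 1 \/ a * d - b * c = -1) ->
  a * u1 + b * u2 = 0 -> c * u1 + d * u2 = 0 -> u1 = 0 /\ u2 = 0.
Proof.
move=> hd h1 h2.
have e1 : (a * d - b * c) * u1 = 0.
  have -> : (a * d - b * c) * u1 = d * (a * u1 + b * u2) - b * (c * u1 + d * u2) by ring.
  by rewrite h1 h2 !mulr0 subr0.
have e2 : (a * d - b * c) * u2 = 0.
  have -> : (a * d - b * c) * u2 = a * (c * u1 + d * u2) - c * (a * u1 + b * u2) by ring.
  by rewrite h1 h2 !mulr0 subr0.
have nz : a * d - b * c != 0 by case: hd => ->.
move/eqP: e1; rewrite mulf_eq0 (negbTE nz) /= => /eqP ->.
by move/eqP: e2; rewrite mulf_eq0 (negbTE nz) /= => /eqP ->.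
Qed.

Lemma lin_inj a b c d (u v : vec) : (a * d - b * c = 1 \/ a * d - b * c = -1) ->
  lin a b c d u = lin a b c d v -> u = v.
Proof.
case: u => u1 u2; case: v => v1 v2; rewrite /lin /= => hd [e1 e2].
have [h1 h2] := lin_zero a b c d (u1 - v1) (u2 - v2) hd ltac:(lra) ltac:(lra).
congr pair; lra.
Qed.

Definition goodN (t : seq vec) := forall w x y, maxcone t w x -> maxcone t x y -> w <> y ->
  exists b : int, b <= 2 /\ w.1 + y.1 = b * x.1 /\ w.2 + y.2 = b * x.2.

Lemma iso_nef s t : smooth_quadrant_fan s -> goodN t -> toric_iso s t -> nef_anticanonical s.
Proof.
move=> hs hg [a [b [c [d [hd H]]]]] i h0 hi; rewrite acd //.
have m1 : maxcone s (ray s i.-1) (ray s i).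
  exists i.-1; rewrite prednK //; split; [lia | by left].
have m2 : maxcone s (ray s i) (ray s i.+1) by exists i; split; [lia | left].
move/H: m1 => m1; move/H: m2 => m2.
have ne : lin a b c d (ray s i.-1) <> lin a b c d (ray s i.+1).
  move/(lin_inj _ _ _ _ _ _ hd); apply: sq_neq => //; lia.
have [b0 [hb [E1 E2]]] := hg _ _ _ m1 m2 ne.
have [R1 R2] := sq_rec s hs i h0 hi.
have dd := sq_d1 s hs i ltac:(lia).
move: E1 E2 R1 R2 dd; rewrite /lin /det2.
set A := selfint_coeff s i.
case: (ray s i.-1) => p1 p2; case: (ray s i) => q1 q2; case: (ray s i.+1) => r1 r2 /= E1 E2 R1 R2 dd.
have F1 : (A - b0) * (a * q1 + b * q2) = 0.
  by rewrite mulrBl -E1 R1 R2; ring.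
have F2 : (A - b0) * (c * q1 + d * q2) = 0.
  by rewrite mulrBl -E2 R1 R2; ring.
suff : A = b0 by move=> ->; lra.
move/eqP: F1; rewrite mulf_eq0 => /orP[/eqP h|/eqP h1]; first by lra.
move/eqP: F2; rewrite mulf_eq0 => /orP[/eqP h|/eqP h2]; first by lra.
have [z1 z2] := lin_zero _ _ _ _ _ _ hd h1 h2.
by move: dd; rewrite z1 z2 !mul0r subrr.
Qed.
Definition rZ (m i : nat) : vec := if (i <= m)%N then (1, i%:Z) else e2.
Lemma size_fanZ m : size (fanZ m) = m.+2.
Proof. by rewrite /fanZ /= size_cat size_map size_iota addn1. Qed.
Lemma ray_fanZ m i : (i < m.+2)%N -> ray (fanZ m) i = rZ m i.
Proof.
rewrite /ray /rZ /fanZ; case: i => [|i] hi /=; first by [].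
rewrite nth_cat size_map size_iota.
case: ifP => h.
  by rewrite (nth_map 0%N) ?size_iota // nth_iota // add1n ifT.
have -> : i = m by lia.
by rewrite subnn /= ?ltnn.
Qed.

Lemma good_A2 : goodN fanA2.
Proof.
move=> w x y [i [hi H1]] [j [hj H2]] ne.
have ei : i = 0%N by move: hi; rewrite /=; lia.
have ej : j = 0%N by move: hj; rewrite /=; lia.
rewrite ei in H1; rewrite ej in H2; move: H1 H2 ne; rewrite /ray /=.
case=> -[-> ->] -[] [E ->] ne; try by (exfalso; apply: ne). all: by move: E; rewrite /e1 /e2 => -[] /eqP.
Qed.

Lemma rZ_inj m p q : (p <= m.+1)%N -> (q <= m.+1)%N -> rZ m p = rZ m q -> p = q.
Proof.
rewrite /rZ /e2 => hp hq; case: ifP => h1; case: ifP => h2.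
all: move=> E; move: (congr1 fst E) (congr1 snd E) => /= A B; lia.
Qed.

Lemma adjZ m w x : maxcone (fanZ m) w x -> exists p q, [/\ (p <= m.+1)%N, (q <= m.+1)%N,
  (p == q.+1) || (q == p.+1), w = rZ m p & x = rZ m q].
Proof.
move=> [i [hi H]]; rewrite size_fanZ in hi.
rewrite !ray_fanZ in H; try lia.
case: H => -[-> ->].
  by exists i, i.+1; split => //; lia.
by exists i.+1, i; split => //; lia.
Qed.

Lemma rZ_le m i : (i <= m)%N -> rZ m i = (1, i%:Z).
Proof. by move=> h; rewrite /rZ h. Qed.
Lemma rZ_top m : rZ m m.+1 = e2.
Proof. by rewrite /rZ ltnn. Qed.

Lemma coreZ m q : (1 <= q)%N -> (q <= m)%N -> exists b : int, b <= 2 /\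
  (rZ m q.-1).1 + (rZ m q.+1).1 = b * (rZ m q).1 /\
  (rZ m q.-1).2 + (rZ m q.+1).2 = b * (rZ m q).2.
Proof.
move=> h1 h2; rewrite (rZ_le m q h2) (rZ_le m q.-1); last lia.
have [h3|h3] : (q < m)%N \/ q = m by lia.
  rewrite (rZ_le m q.+1) //=.
  exists 2; split => //; split; first by [].
  lia.
rewrite h3 rZ_top /e2 /=.
exists 1; split => //; split; first by [].
lia.
Qed.

Lemma good_Z m : goodN (fanZ m).
Proof.
move=> w x y /adjZ [p [q [hp hq hpq -> ->]]] /adjZ [q' [p' [hq' hp' hpq' E ->]]] ne.
have eq : q' = q by apply: (rZ_inj m q' q hq' hq); rewrite E.
subst q'.
have np : p <> p' by move=> e; apply: ne; rewrite e.
have [[e1 e2]|[e1 e2]] : (p = q.-1 /\ p' = q.+1) \/ (p = q.+1 /\ p' = q.-1) by lia.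
  subst; apply: coreZ; lia.
subst; have [b [hb [c1 c2]]] := coreZ m q ltac:(lia) ltac:(lia).
by exists b; rewrite addrC c1 addrC c2.
Qed.

Definition sw (u : vec) : vec := (u.2, u.1).
Lemma swK u : sw (sw u) = u. Proof. by case: u. Qed.
Lemma lin_id u : lin 1 0 0 1 u = u.
Proof. by case: u => a b; rewrite /lin /= !mul1r !mul0r addr0 add0r. Qed.
Lemma lin_sw u : lin 0 1 1 0 u = sw u.
Proof. by case: u => a b; rewrite /lin /sw /= !mul1r !mul0r addr0 add0r. Qed.

Lemma iso_id s t : size s = size t -> (forall i, (i < size s)%N -> ray s i = ray t i) ->
  toric_iso s t.
Proof.
move=> hN hr; exists 1, 0, 0, 1; split; first by left; rewrite mul1r mul0r subr0.
move=> u v; rewrite !lin_id; split=> -[i [hi H]]; exists i.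
  by rewrite -hN; split=> //; rewrite -!hr //; lia.
rewrite hN; split=> //; rewrite !hr //; lia.
Qed.

Lemma iso_sw s t : size s = size t ->
  (forall i, (i < size s)%N -> ray s i = sw (ray t ((size s).-1 - i))) ->
  toric_iso s t.
Proof.
move=> hN hr; exists 0, 1, 1, 0; split; first by right; rewrite mul1r mul0r sub0r.
move=> u v; rewrite !lin_sw; split.
  move=> [i [hi H]]; exists ((size s).-1 - i.+1)%N; split; first by rewrite -hN; lia.
  have e1 : ((size s).-1 - i.+1).+1 = ((size s).-1 - i)%N by lia.
  rewrite e1; move: H; rewrite !hr //; try lia.
  by case=> -[-> ->]; rewrite !swK; [right|left].
move=> [i [hi H]]; exists ((size s).-1 - i.+1)%N; split; first by rewrite hN; lia.
have e1 : ((size s).-1 - ((size s).-1 - i.+1)%N)%N = i.+1 by lia.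
have e2 : ((size s).-1 - ((size s).-1 - i.+1).+1)%N = i by lia.
rewrite !hr; try lia. rewrite e1 e2.
by case: H => -[<- <-]; rewrite !swK; [right|left].
Qed.

Lemma pairE (u : vec) a b : u.1 = a -> u.2 = b -> u = (a, b).
Proof. by case: u => ? ? /= -> ->. Qed.

Section Class.
Variable s : seq vec.
Hypothesis hs : smooth_quadrant_fan s.
Hypothesis hnef : nef_anticanonical s.
Local Notation N := (size s).
Local Notation v := (ray s).
Local Notation A := (selfint_coeff s).

Lemma A12 j : (0 < j)%N -> (j.+1 < N)%N -> A j = 1 \/ A j = 2.
Proof.
move=> h1 h2; have := hnef j h1 h2; rewrite acd // => h.
have := sq_a_pos s hs j h1 h2; lia.
Qed.

Lemma v0 : v 0 = e1. Proof. by case: hs. Qed.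
Lemma vn : v N.-1 = e2. Proof. by case: hs. Qed.
Lemma N2 : (1 < N)%N. Proof. by case: hs. Qed.

Definition k := (v 1).1.
Lemma v1_2 : (v 1).2 = 1.
Proof.
have := sq_d1 s hs 0 N2; rewrite v0 /det2 /e1 /=.
by rewrite mul1r mul0r subr0.
Qed.

Lemma pre i : (i.+1 < N)%N -> (forall j, (0 < j)%N -> (j <= i)%N -> A j = 2) ->
  [/\ (v i).1 = 1 + i%:Z * (k - 1), (v i).2 = i%:Z,
      (v i.+1).1 = 1 + (i.+1)%:Z * (k - 1) & (v i.+1).2 = (i.+1)%:Z].
Proof.
elim: i => [|i IH] h hA.
  rewrite v0 v1_2 /e1 /= /k; split => //; ring.
have [a1 a2 a3 a4] := IH ltac:(lia) ltac:(move=> j j1 j2; apply: hA => //; lia).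
have [R1 R2] := sq_rec s hs i.+1 isT h.
rewrite hA // in R1 R2.
split => //.
  rewrite R1 a3 /= a1.
  have -> : (i.+2)%:Z = i%:Z + 2 by lia.
  have -> : (i.+1)%:Z = i%:Z + 1 by lia.
  ring.
rewrite R2 a4 /= a2; lia.
Qed.

Lemma post p t : (0 < p)%N -> A p = 1 -> ((p + t).+1 < N)%N ->
  (forall j, (p < j)%N -> (j <= p + t)%N -> A j = 2) ->
  [/\ (v (p + t)).1 = (v p).1 - t%:Z * (v p.-1).1,
      (v (p + t)).2 = (v p).2 - t%:Z * (v p.-1).2,
      (v (p + t).+1).1 = (v p).1 - (t.+1)%:Z * (v p.-1).1 &
      (v (p + t).+1).2 = (v p).2 - (t.+1)%:Z * (v p.-1).2].
Proof.
move=> hp hAp; elim: t => [|t IH] h hA.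
  have [R1 R2] := sq_rec s hs p hp ltac:(lia).
  rewrite addn0 R1 R2 hAp; split; ring.
have [a1 a2 a3 a4] := IH ltac:(lia) ltac:(move=> j j1 j2; apply: hA => //; lia).
have [R1 R2] := sq_rec s hs (p + t).+1 isT ltac:(lia).
rewrite hA in R1 R2; try lia.
rewrite !addnS /= in R1 R2 *.
split => //.
  rewrite R1 a3 a1.
  have -> : (t.+2)%:Z = t%:Z + 2 by lia.
  have -> : (t.+1)%:Z = t%:Z + 1 by lia.
  ring.
rewrite R2 a4 a2.
have -> : (t.+2)%:Z = t%:Z + 2 by lia.
have -> : (t.+1)%:Z = t%:Z + 1 by lia.
ring.
Qed.

Lemma pre_all p i : (forall j, (0 < j)%N -> (j < p)%N -> A j = 2) -> (i <= p)%N -> (p < N)%N ->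
  (v i).1 = 1 + i%:Z * (k - 1) /\ (v i).2 = i%:Z.
Proof.
move=> hA hi hp; case: i hi => [|i] hi.
  by rewrite v0 /e1 /=; split => //; ring.
have [_ _ a3 a4] := pre i ltac:(lia) ltac:(move=> j j1 j2; apply: hA => //; lia).
by [].
Qed.

Lemma post_all p i : (0 < p)%N -> A p = 1 -> (forall j, (p < j)%N -> (j.+1 < N)%N -> A j = 2) ->
  (p <= i)%N -> (i < N)%N ->
  (v i).1 = (v p).1 - (i - p)%:Z * (v p.-1).1 /\ (v i).2 = (v p).2 - (i - p)%:Z * (v p.-1).2.
Proof.
move=> hp hAp hA hi hiN.
have [e|lt] : i = p \/ (p < i)%N by lia.
  by rewrite e subnn !mul0r !subr0.
have [_ _ a3 a4] := post p (i.-1 - p)%N hp hAp ltac:(lia)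
  ltac:(move=> j j1 j2; apply: hA => //; lia).
have e1 : (p + (i.-1 - p)).+1 = i by lia.
have e2 : (i.-1 - p).+1 = (i - p)%N by lia.
by rewrite e1 e2 in a3 a4.
Qed.

Lemma classify : toric_iso s fanA2 \/ exists m, (1 <= m)%N /\ toric_iso s (fanZ m).
Proof.
have hN := N2.
have [eN|gt2] : N = 2 \/ (2 < N)%N by lia.
  left; apply: iso_id; first by rewrite eN.
  move=> i hi; have : i = 0%N \/ i = 1%N by lia.
  by case=> ->; [rewrite v0 | have := vn; rewrite eN].
right.
pose P j := [&& (0 < j)%N, (j.+1 < N)%N & A j == 1].
have [H|H] := classic (exists j, P j); last first.
  exfalso.
  have allA : forall j, (0 < j)%N -> (j <= N - 2)%N -> A j = 2.
    move=> j j1 j2; case: (A12 j j1 ltac:(lia)) => // h; exfalso; apply: H; exists j.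
    by rewrite /P j1 h eqxx /=; lia.
  have [_ _ _ a4] := pre (N - 2) ltac:(lia) allA.
  have e : (N - 2).+1 = N.-1 by lia.
  rewrite e vn /e2 /= in a4; lia.
case: (ex_minnP H) => p /and3P [hp0 hpN /eqP hAp] pmin.
have hbelow : forall j, (0 < j)%N -> (j < p)%N -> A j = 2.
  move=> j j1 j2; case: (A12 j j1 ltac:(lia)) => // h.
  have := pmin j; rewrite /P j1 h eqxx /=. move=> hh; have := hh ltac:(lia); lia.
pose P' j := [&& (p < j)%N, (j.+1 < N)%N & A j == 1].
have habove : forall j, (p < j)%N -> (j.+1 < N)%N -> A j = 2.
  suff nH : ~ exists j, P' j.
    move=> j j1 j2; case: (A12 j ltac:(lia) j2) => // h; exfalso; apply: nH; exists j.
    by rewrite /P' j1 j2 h eqxx.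
  move=> H'; case: (ex_minnP H') => q /and3P [hq0 hqN /eqP hAq] qmin.
  have [g1 g2 g3 g4] := post p (q.-1 - p)%N hp0 hAp ltac:(lia)
    ltac:(move=> j j1 j2; case: (A12 j ltac:(lia) ltac:(lia)) => // h;
          have := qmin j; rewrite /P' j1 h eqxx /= => hh; have := hh ltac:(lia); lia).
  have e1 : (p + (q.-1 - p))%N = q.-1 by lia.
  have e2 : (q.-1).+1 = q by lia.
  rewrite e1 e2 in g1 g2 g3 g4.
  have [R1 R2] := sq_rec s hs q ltac:(lia) hqN.
  rewrite hAq mul1r in R1 R2.
  set t := (q.-1 - p)%N in g1 g2 g3 g4.
  have et : (t.+1)%:Z = t%:Z + 1 by lia.
  rewrite et in g3 g4.
  have Q1 : (v q.+1).1 = - (v p.-1).1 by rewrite R1 g3 g1; ring.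
  have Q2 : (v q.+1).2 = - (v p.-1).2 by rewrite R2 g4 g2; ring.
  have [c1 c2] := sq_quad s hs q.+1 hqN.
  have [d1 d2] := sq_quad s hs p.-1 ltac:(lia).
  have z1 : (v p.-1).1 = 0 by lra.
  have z2 : (v p.-1).2 = 0 by lra.
  have := sq_d1 s hs p.-1 ltac:(lia).
  by rewrite /det2 z1 z2 !mul0r subrr.
have [g1 g2 g3 g4] := post p (N.-2 - p)%N hp0 hAp ltac:(lia)
  ltac:(move=> j j1 j2; apply: habove => //; lia).
have e1 : (p + (N.-2 - p)).+1 = N.-1 by lia.
rewrite e1 vn /e2 /= in g3 g4.
have [f1 f2] := pre_all p p hbelow (leqnn p) ltac:(lia).
have [h1 h2] := pre_all p p.-1 hbelow ltac:(lia) ltac:(lia).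
set T := (N.-2 - p).+1 in g3 g4.
have ep : (p.-1)%:Z = p%:Z - 1 by lia.
rewrite ep in h1 h2.
rewrite f1 f2 h1 h2 in g3 g4.
have F : (p%:Z - 1) * (1 - T%:Z) = 0.
  have -> : (p%:Z - 1) * (1 - T%:Z) = p%:Z - T%:Z * (p%:Z - 1) - 1 by ring.
  by rewrite -g4 subrr.
move/eqP: F; rewrite mulf_eq0 => /orP[/eqP F|/eqP F].
-
  have p1 : p = 1%N by lia.
  have hk : k = T%:Z.
    move: g3; rewrite p1 /=. move=> g3. lra.
  exists (N - 2)%N; split; first lia.
  apply: iso_sw; first by rewrite size_fanZ; lia.
  move=> i hi; rewrite ray_fanZ; last lia.
  have [i0|ipos] : i = 0%N \/ (0 < i)%N by lia.
    rewrite i0 v0 subn0.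
    have -> : N.-1 = (N - 2).+1 by lia.
    by rewrite rZ_top.
  rewrite rZ_le; last lia.
  have [a1 a2] := post_all p i hp0 hAp habove ltac:(lia) hi.
  rewrite p1 v0 /e1 /= in a1 a2.
  have b1 := pre_all p 1 hbelow ltac:(lia) ltac:(lia).
  case: b1 => b1 _.
  apply: pairE => /=; last first.
    by rewrite a2 v1_2 mulr0 subr0.
  rewrite a1 b1 hk /T p1; lia.
-
  have T1 : T = 1%N by lia.
  have hk : k = 1.
    move: g3; rewrite T1 => g3. lra.
  exists p; split => //.
  apply: iso_id; first by rewrite size_fanZ; lia.
  move=> i hi; rewrite ray_fanZ; last lia.
  have [ile|igt] : (i <= p)%N \/ i = N.-1 by lia.
    rewrite rZ_le //.
    have [a1 a2] := pre_all p i hbelow ile ltac:(lia).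
    by apply: pairE; rewrite ?a1 ?a2 // hk subrr mulr0 addr0.
  rewrite igt vn.
  have -> : N.-1 = p.+1 by lia.
  by rewrite rZ_top.
Qed.
End Class.

Lemma smooth_A2 : smooth_quadrant_fan fanA2.
Proof.
split => //.
  move=> i hi; have : i = 0%N \/ i = 1%N by move: hi; rewrite /=; lia.
  by case=> ->; rewrite /ray /=; split.
move=> i hi; have -> : i = 0%N by move: hi; rewrite /=; lia.
by [].
Qed.

Lemma smooth_Z m : smooth_quadrant_fan (fanZ m).
Proof.
split.
- by rewrite size_fanZ.
- by rewrite ray_fanZ // rZ_le.
- by rewrite size_fanZ ray_fanZ // rZ_top.
- move=> i; rewrite size_fanZ => hi; rewrite ray_fanZ // /rZ.
  by case: ifP => _ /=; split => //.
- move=> i; rewrite size_fanZ => hi; rewrite !ray_fanZ //; try lia.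
  have [h|h] : (i.+1 <= m)%N \/ i = m by lia.
    rewrite !rZ_le //; try lia. rewrite /det2 /=; lia.
  rewrite h rZ_top rZ_le // /det2 /e2 /=; lia.
Qed.

Theorem lemma5p5 :
  smooth_quadrant_fan fanA2 /\
  (forall m : nat, (1 <= m)%N -> smooth_quadrant_fan (fanZ m)) /\
  (forall s : seq vec, smooth_quadrant_fan s ->
     (nef_anticanonical s <->
        (toric_iso s fanA2 \/
         exists m : nat, (1 <= m)%N /\ toric_iso s (fanZ m)))).
Proof.
split; first exact: smooth_A2.
split; first by move=> m _; apply: smooth_Z.
move=> s hs; split; first by move=> hn; apply: classify.
case=> [h|[m [_ h]]].
  exact: (iso_nef s fanA2 hs good_A2 h).
exact: (iso_nef s (fanZ m) hs (good_Z m) h).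
Qed.
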